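(* Let $i,j$ be positive integers with $i\mid j$, and write $i=uv$, where $v$ is the largest divisor of $i$ coprime with $j/i$. Let $C_j$ be a cyclic group of order $j$ and $C_i$ its (unique) subgroup of order $i$. Then (1) every element of a generating coset of $C_j/C_i$ has order divisible by $j/v$; (2) if $d\mid v$, then the number of elements of order $jd/v$ in a generating coset of $C_j/C_i$ is $u\,\phi(d)$, where $\phi$ is Euler's totient function.
   Context: A generating coset of $C_j/C_i$ is a coset of $C_i$ in $C_j$ which generates the quotient group $C_j/C_i$. *)

(* Defs.v *)
From mathcomp Require Import all_boot all_order all_fingroup all_solvable.
Set Implicit Arguments. Unset Strict Implicit. Unset Printing Implicit Defensive.
Local Open Scope group_scope.

Definition vpart (i j : nat) : nat :=
  \max_(d < i.+1 | (d %| i) && coprime d (j %/ i)) d.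

Definition generating_coset (gT : finGroupType) (G H : {group gT})
  (C : {set gT}) : Prop :=
  exists2 x, x \in G & C = H :* x /\ generator (G / H) (coset H x).

(* Main.v *)
Set Warnings "-notation-overridden".
From mathcomp Require Import all_boot all_order all_fingroup all_solvable.

Require Import Defs.
Lemma sum_split n q (F : nat -> nat) :
  \sum_(0 <= k < n * q) F k = \sum_(0 <= s < n) \sum_(0 <= t < q) F (s * q + t).
Proof.
elim: n => [|n IH]; first by rewrite mul0n !big_geq.
rewrite big_nat_recr //= -IH mulSnr (big_cat_nat _ (leq_addr q (n * q))) //=.
congr (_ + _).
rewrite -{1}(add0n (n * q)) big_addn addKn.
by apply: eq_bigr => t _; rewrite addnC.
Qed.

Lemma sum_gcd_totient c d : 0 < c ->
  \sum_(0 <= r < d * c) (gcdn (c * d) r == c) = totient d.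
Proof.
move=> c0.
rewrite totient_count_coprime sum_split; apply: eq_bigr => s _.
rewrite big_ltn // addn0 big_nat big1 ?addn0.
  by rewrite (mulnC s) -muln_gcdr -{2}(muln1 c) eqn_pmul2l.
move=> t /andP [t0 tc]; apply/eqP; rewrite eqb0; apply/eqP => E.
have : c %| s * c + t by rewrite -{1}E dvdn_gcdr.
rewrite dvdn_addr ?dvdn_mull // => /(dvdn_leq t0).
by rewrite leqNgt tc.
Qed.

Lemma mod_inj_aux v m a t t' : coprime v m -> t' <= t -> t < v ->
  (m * t + a == m * t' + a %[mod v]) -> t = t'.
Proof.
move=> co le tv; rewrite eqn_modDr eqn_mod_dvd ?leq_mul2l ?le ?orbT //.
rewrite -mulnBr Gauss_dvdr //.
case: (posnP (t - t')) => [h0 _ | pos /(dvdn_leq pos) h].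
  by apply/eqP; rewrite eqn_leq le -subn_eq0 h0.
by have := leq_ltn_trans (leq_trans h (leq_subr t' t)) tv; rewrite ltnn.
Qed.

Lemma sum_count u v m a d : 0 < v -> coprime v m -> d %| v ->
  \sum_(0 <= k < u * v) (gcdn v (m * k + a) == v %/ d) = u * totient d.
Proof.
move=> v0 co dv.
rewrite sum_split.
rewrite (eq_bigr (fun _ => \sum_(0 <= t < v) (gcdn v (m * t + a) == v %/ d))); last first.
  move=> s _; apply: eq_bigr => t _.
  by rewrite mulnDr -addnA mulnA gcdnMDl.
rewrite sum_nat_const_nat subn0; congr (_ * _).
have hP t : (m * t + a) %% v < v by rewrite ltn_pmod.
pose h (t : 'I_v) : 'I_v := Ordinal (hP t).
have hinj : injective h.
  move=> t t' /(congr1 val) /= /eqP E.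
  case: (leqP t' t) => le; apply: val_inj.
    exact: (@mod_inj_aux v m a t t' co le (ltn_ord t) E).
  by apply/esym; apply: (@mod_inj_aux v m a t' t co (ltnW le) (ltn_ord t')); rewrite eq_sym.
rewrite big_mkord (eq_bigr (fun t => (gcdn v (h t) == v %/ d) : nat)); last first.
  by move=> t _; rewrite /= gcdn_modr.
have -> : \sum_(t < v) ((gcdn v (h t) == v %/ d) : nat) = \sum_(r < v) ((gcdn v r == v %/ d) : nat).
  by rewrite [RHS](reindex_inj hinj).
rewrite -(big_mkord xpredT (fun r => (gcdn v r == v %/ d) : nat)).
have dp : 0 < d by move: dv; case: (d) => //; rewrite dvd0n => /eqP v00; rewrite v00 in v0.
rewrite -{1 2}(divnK dv) -{1}(mulnC d) sum_gcd_totient //.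
by rewrite divn_gt0 // dvdn_leq.
Qed.
Lemma vpart_spec i j : 0 < i ->
  let v := vpart i j in
  [/\ 0 < v, v %| i, coprime v (j %/ i) &
      forall p, prime p -> p %| i %/ v -> p %| j %/ i].
Proof.
move=> i0 v.
have one_lt : 1 < i.+1 by [].
have [k Pk Ek] : {k : 'I_i.+1 | (k %| i) && coprime k (j %/ i) & v = k}.
  apply: eq_bigmax_cond.
  by apply/card_gt0P; exists (Ordinal one_lt); rewrite unfold_in /= dvd1n coprime1n.
case/andP: Pk => kdi kco.
have vdi : v %| i by rewrite Ek.
have v0 : 0 < v.
  by rewrite lt0n; apply/eqP => v0; move: vdi; rewrite v0 dvd0n => /eqP i00; rewrite i00 in i0.
split => //; first by rewrite Ek.
move=> p pp pd; case: (boolP (p %| j %/ i)) => // /negP npd; exfalso.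
have pco : coprime p (j %/ i) by rewrite prime_coprime //; apply/negP.
have pvd : p * v %| i by rewrite -(divnK vdi) dvdn_mul.
have lt : p * v < i.+1 by rewrite ltnS dvdn_leq.
have := @leq_bigmax_cond _ (fun d : 'I_i.+1 => (d %| i) && coprime d (j %/ i)) (fun d => d : nat) (Ordinal lt).
rewrite /= pvd coprimeMl pco Ek kco -Ek => /(_ isT).
rewrite -[X in _ <= X]mul1n leq_pmul2r //.
by rewrite leqNgt prime_gt1.
Qed.

Lemma div_swap v G d : 0 < v -> G %| v -> d %| v -> (v %/ G == d) = (G == v %/ d).
Proof.
move=> v0 Gv dv.
have dp : 0 < d by move: dv; case: (d) => //; rewrite dvd0n => /eqP v00; rewrite v00 in v0.
have Gp : 0 < G by move: Gv; case: (G) => //; rewrite dvd0n => /eqP v00; rewrite v00 in v0.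
apply/eqP/eqP => E.
  by rewrite -{1}(divnK Gv) E mulKn.
have vdp : 0 < v %/ d by rewrite divn_gt0 // dvdn_leq.
by rewrite E -{1}(divnK dv) mulKn.
Qed.

Lemma div_dvd j v G : G %| v -> v %| j -> j %/ v %| j %/ G.
Proof.
by move=> Gv vj; rewrite -{2}(divnK vj) -muln_divA // dvdn_mulr.
Qed.

Local Open Scope group_scope.

Theorem lemma3p1 (gT : finGroupType) (G H : {group gT}) (i j : nat) :
  0 < i -> 0 < j -> i %| j ->
  cyclic G -> #|G| = j -> H \subset G -> #|H| = i ->
  let v := vpart i j in
  let u := i %/ v in
  (forall C : {set gT}, generating_coset G H C ->
     forall y, y \in C -> (j %/ v) %| #[y]) /\
  (forall d, d %| v -> forall C : {set gT}, generating_coset G H C ->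
     #|[set y in C | #[y] == (j * d %/ v)%N]| = (u * totient d)%N).
Proof.
move=> i0 j0 idj cycG oG sHG oH v u.
have [v0 vdi vco vpr] := vpart_spec i j i0.
rewrite -/v in v0 vdi vco vpr.
set m := j %/ i in vco vpr *.
have jE : j = (m * i)%N by rewrite divnK.
have m0 : 0 < m by rewrite divn_gt0 // dvdn_leq.
have iE : i = (u * v)%N by rewrite divnK.
have vdj : v %| j := dvdn_trans vdi idj.
have [g Gg] := cyclicP cycG.
have og : #[g] = j by rewrite -oG Gg.
have ogm : #[g ^+ m] = i.
  by rewrite orderXgcd og jE gcdnC gcdnMr mulKn.
have HE : H :=: <[g ^+ m]>.
  apply/eqP; rewrite (eq_subG_cyclic cycG sHG); last by rewrite Gg cycle_subG mem_cycle.
  by rewrite oH -orderE ogm.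
have nHG : G \subset 'N(H) := sub_abelian_norm (cyclic_abelian cycG) sHG.
pose f (a : nat) (k : 'I_i) := g ^+ (m * k + a).
have key : forall C, generating_coset G H C ->
    exists a, coprime a m /\ C = [set f a k | k : 'I_i].
  move=> C [x xG [CE gen]].
  have xg : x \in <[g]> by rewrite -Gg.
  have [a _ xE] := cyclePmin xg.
  exists a; split.
    have gq : coset H g \in <[coset H x]>.
      by rewrite -(eqP gen) mem_quotient // Gg cycle_id.
    case/cycleP: gq => b gb.
    have xN : x \in 'N(H) := subsetP nHG x xG.
    have gN : g \in 'N(H) by apply: (subsetP nHG); rewrite Gg cycle_id.
    rewrite -morphX // in gb.
    have [z zH gz] := kercoset_rcoset gN (groupX b xN) gb.
    rewrite HE in zH; case/cycleP: zH => c zc.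
    have E : g ^+ 1 == g ^+ (m * c + a * b).
      by rewrite expg1 {1}gz zc xE -!expgM -expgD.
    rewrite eq_expg_mod_order og in E.
    have mj : m %| j by rewrite jE dvdn_mulr.
    have E' : 1 %% m = (a * b) %% m.
      by rewrite -(modn_dvdm 1 mj) (eqP E) modn_dvdm // (mulnC m c) modnMDl.
    have [m1|m1] := leqP m 1.
      have m1' : m = 1%N by apply/eqP; rewrite eqn_leq m1 m0.
      by rewrite /coprime m1' gcdn1.
    rewrite (modn_small m1) in E'.
    apply: modn_coprime; last by exists b; rewrite -E'.
    by rewrite lt0n; apply/eqP => a0; rewrite a0 mul0n mod0n in E'.
  rewrite CE HE xE; apply/setP => y; apply/rcosetP/imsetP.
    case=> h /cyclePmin [k kl ->] ->; rewrite ogm in kl.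
    by exists (Ordinal kl) => //; rewrite /f /= expgD expgM.
  case=> k _ ->; exists ((g ^+ m) ^+ k); first exact: mem_cycle.
  by rewrite /f expgD expgM.
have ordf a k : #[f a k] = j %/ gcdn j (m * k + a) by rewrite /f orderXgcd og.
have u0 : 0 < u by rewrite divn_gt0 // dvdn_leq.
have gcdE a k : coprime a m -> gcdn j (m * k + a) = gcdn v (m * k + a).
  move=> co.
  have ce : coprime (m * k + a) m by rewrite /coprime gcdnC (mulnC m k) gcdnMDl gcdnC.
  have cu : coprime (m * k + a) u.
    apply/negPn/negP => nco.
    have g1 : 1 < gcdn (m * k + a) u.
      by rewrite ltn_neqAle eq_sym nco gcdn_gt0 u0 orbT.
    have pp := pdiv_prime g1.
    have pd := pdiv_dvd (gcdn (m * k + a) u).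
    have pe : pdiv (gcdn (m * k + a) u) %| m * k + a := dvdn_trans pd (dvdn_gcdl _ _).
    have pu : pdiv (gcdn (m * k + a) u) %| u := dvdn_trans pd (dvdn_gcdr _ _).
    have pm := vpr _ pp pu.
    have : pdiv (gcdn (m * k + a) u) %| gcdn (m * k + a) m by rewrite dvdn_gcd pe pm.
    rewrite (eqP ce) dvdn1 => /eqP p1.
    by move: (prime_gt1 pp); rewrite p1.
  have jE' : j = ((m * u) * v)%N by rewrite -mulnA -iE.
  rewrite jE' gcdnC Gauss_gcdr; first by rewrite gcdnC.
  by rewrite coprimeMr ce cu.
split.
  move=> C /key [a [co ->]] y /imsetP [k _ ->].
  by rewrite ordf gcdE //; apply: div_dvd => //; exact: dvdn_gcdl.
move=> d dv C /key [a [co ->]].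
have finj : injective (f a).
  move=> k k' /eqP; rewrite /f eq_expg_mod_order og jE eqn_modDr => E; apply: val_inj.
  by move: E; rewrite -!muln_modr eqn_pmul2l // !modn_small // => /eqP.
have ordE (k : 'I_i) : (#[f a k] == j * d %/ v) = (gcdn v (m * k + a) == v %/ d).
  have G0v : gcdn v (m * k + a) %| v := dvdn_gcdl _ _.
  rewrite ordf gcdE // -(@div_swap v _ d v0 G0v dv).
  have e1 : j %/ gcdn v (m * k + a) = (j %/ v * (v %/ gcdn v (m * k + a)))%N.
    by rewrite muln_divA // divnK.
  have e2 : j * d %/ v = (j %/ v * d)%N by rewrite divn_mulAC.
  rewrite e1 e2 eqn_pmul2l //.
  by rewrite divn_gt0 // dvdn_leq.
have -> : [set y in [set f a k | k : 'I_i] | #[y] == j * d %/ v] =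
          f a @: [set k : 'I_i | gcdn v (m * k + a) == v %/ d].
  apply/setP => y; rewrite inE; apply/andP/imsetP.
    by case=> /imsetP [k _ ->] ok; exists k => //; rewrite inE -ordE.
  by case=> k; rewrite inE -ordE => ok ->; rewrite imset_f.
rewrite (card_imset _ finj) -sum1_card big_mkcond /=.
rewrite (eq_bigr (fun k : 'I_i => (gcdn v (m * k + a) == v %/ d) : nat)); last first.
  by move=> k _; rewrite inE; case: (_ == _).
rewrite -(big_mkord xpredT (fun k => (gcdn v (m * k + a) == v %/ d) : nat)).
by rewrite {1}iE sum_count.
Qed.
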